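(* Let $b_1,b_2\in\mathbb{R}$ satisfy $b_1>0$, $3b_1+b_2<0$ and $6b_1+b_2>0$, let $\phi$ be as below, $g(p)=p+\phi(p)$, and set $u_-=1-\alpha_0$, $u_0=1/2$, $u_+=\alpha_0$. Then: (G1) $g(u_+-\delta)+g(u_-+\delta)=2u_0$ for all $\delta$; (G2) $g'(u_0)>1$ and $g'(u_-)=g'(u_+)<1$; (G3) $g''(p)>0$ for $p\in(u_-,u_0)$ and $g''(p)<0$ for $p\in(u_0,u_+)$.
   Context: $\phi(p)=b_1p(1-p)^4+b_2p^2(1-p)^3-b_2p^3(1-p)^2-b_1p^4(1-p)$; $\alpha_0=1/2+\beta_0$ with $\beta_0=\frac{\sqrt{-(b_1-b_2)(3b_1+b_2)}}{2(b_1-b_2)}$, so that $1-\alpha_0<1/2<\alpha_0$ are the roots of $\phi$ in $(0,1)$ other than $1/2$. *)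

(* Defs.v *)
From Stdlib Require Import Reals.
From Coquelicot Require Import Coquelicot.
Open Scope R_scope.

Definition phi (b1 b2 p : R) : R :=
  b1 * p * (1 - p) ^ 4 + b2 * p ^ 2 * (1 - p) ^ 3
  - b2 * p ^ 3 * (1 - p) ^ 2 - b1 * p ^ 4 * (1 - p).

Definition g (b1 b2 p : R) : R := p + phi b1 b2 p.

Definition beta0 (b1 b2 : R) : R :=
  sqrt (- (b1 - b2) * (3 * b1 + b2)) / (2 * (b1 - b2)).

Definition alpha0 (b1 b2 : R) : R := 1 / 2 + beta0 b1 b2.

(* Main.v *)
Require Import Defs.
From Stdlib Require Import Reals Lra Psatz.
From Coquelicot Require Import Coquelicot.
Open Scope R_scope.

Definition AA (b1 b2 : R) := (3 * b1 + b2) / 4.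
Definition BB (b1 b2 : R) := b1 - b2.
Definition g1 (b1 b2 p : R) :=
  1 - AA b1 b2 / 2 - 3 * (BB b1 b2 / 2 - 2 * AA b1 b2) * (p - 1/2) ^ 2
  + 10 * BB b1 b2 * (p - 1/2) ^ 4.
Definition g2 (b1 b2 p : R) :=
  (p - 1/2) * (12 * AA b1 b2 - 3 * BB b1 b2 + 40 * BB b1 b2 * (p - 1/2) ^ 2).

Lemma Dg (b1 b2 p : R) : Derive (g b1 b2) p = g1 b1 b2 p.
Proof.
  apply is_derive_unique. unfold g, phi, g1, AA, BB.
  auto_derive; [exact I|]. field.
Qed.

Lemma D2g (b1 b2 p : R) : Derive_n (g b1 b2) 2 p = g2 b1 b2 p.
Proof.
  simpl. rewrite (Derive_ext _ (g1 b1 b2)); [|intro; apply Dg].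
  apply is_derive_unique. unfold g1, g2, AA, BB.
  auto_derive; [exact I|]. field.
Qed.

Theorem mainTheorem8 (b1 b2 : R) :
  0 < b1 -> 3 * b1 + b2 < 0 -> 0 < 6 * b1 + b2 ->
  let um := 1 - alpha0 b1 b2 in
  let u0 := 1 / 2 in
  let up := alpha0 b1 b2 in
  (* (G1) *)
  (forall d : R, g b1 b2 (up - d) + g b1 b2 (um + d) = 2 * u0) /\
  (* (G2) *)
  (1 < Derive (g b1 b2) u0 /\
   Derive (g b1 b2) um = Derive (g b1 b2) up /\
   Derive (g b1 b2) up < 1) /\
  (* (G3) *)
  (forall p : R, um < p < u0 -> 0 < Derive_n (g b1 b2) 2 p) /\
  (forall p : R, u0 < p < up -> Derive_n (g b1 b2) 2 p < 0).
Proof.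
  intros H1 H2 H3 um u0 up.
  assert (HB : 0 < b1 - b2) by lra.
  set (s := sqrt (- (b1 - b2) * (3 * b1 + b2))).
  assert (Hs2 : s * s = - (b1 - b2) * (3 * b1 + b2)).
  { unfold s. apply sqrt_sqrt. nra. }
  assert (Hs : 0 < s). { unfold s. apply sqrt_lt_R0. nra. }
  set (be := beta0 b1 b2).
  assert (Hbe : be = s / (2 * (b1 - b2))) by reflexivity.
  assert (Hbe0 : 0 < be). { rewrite Hbe. apply Rdiv_lt_0_compat; lra. }
  assert (Hbe2 : 4 * (b1 - b2) * (be * be) = - (3 * b1 + b2)).
  { rewrite Hbe. replace (4 * (b1 - b2) * (s / (2 * (b1 - b2)) * (s / (2 * (b1 - b2)))))
      with ((s * s) / (b1 - b2)) by (field; lra). rewrite Hs2. field. lra. }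
  assert (Hup : up = 1/2 + be) by (unfold up, alpha0; fold be; reflexivity).
  assert (Hum : um = 1/2 - be) by (unfold um; change (1 - up = 1/2 - be); rewrite Hup; lra).
  clearbody be um up. subst um up u0.
  split; [|split; [|split]].
  - intro d. unfold g, phi. field.
  - rewrite !Dg. unfold g1, AA, BB. split; [|split].
    + lra.
    + ring.
    + replace (1 / 2 + be - 1 / 2) with be by ring.
      assert (E: be ^ 4 = (be*be)*(be*be)) by ring.
      assert (Hq : (b1 - b2) * (be*be) = - (3*b1+b2)/4) by lra.
      enough ((3 * b1 + b2) / 4 * (4*b1) / (b1 - b2) < 0).
      { assert (Heq : - ((3 * b1 + b2) / 4 / 2) - 3 * ((b1 - b2) / 2 - 2 * ((3 * b1 + b2) / 4)) * be ^ 2 +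
                 10 * (b1 - b2) * be ^ 4 = (3 * b1 + b2) / 4 * (4*b1) / (b1 - b2)).
        { apply (Rmult_eq_reg_l (b1 - b2)); [|lra].
          field_simplify; [|lra]. nra. }
        lra. }
      apply Rmult_lt_reg_r with (b1 - b2); [lra|].
      field_simplify; [|lra]. nra.
  - intros p [Hp1 Hp2]. rewrite D2g. unfold g2, AA, BB.
    set (q := p - 1/2).
    assert (Hq1 : - be < q < 0) by (unfold q; lra).
    assert (q*q < be*be) by nra.
    assert ((b1-b2)*(q*q) < (b1-b2)*(be*be)) by nra.
    assert (12 * ((3 * b1 + b2) / 4) - 3 * (b1 - b2) + 40 * (b1 - b2) * q ^ 2 < 0) by nra.
    nra.
  - intros p [Hp1 Hp2]. rewrite D2g. unfold g2, AA, BB.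
    set (q := p - 1/2).
    assert (Hq1 : 0 < q < be) by (unfold q; lra).
    assert (q*q < be*be) by nra.
    assert ((b1-b2)*(q*q) < (b1-b2)*(be*be)) by nra.
    assert (12 * ((3 * b1 + b2) / 4) - 3 * (b1 - b2) + 40 * (b1 - b2) * q ^ 2 < 0) by nra.
    nra.
Qed.
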